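(* Let $P=(p_1,\dots,p_n)$ be points in $\mathbb{R}^d$, $\mathcal{F}$ a constraint for $k$-CMeans, and $\mathcal{C}=\{c_1,\dots,c_k\}\subset\mathbb{R}^d$ with $\omega=\frac1n\sum_{i=1}^n\min_{c\in\mathcal{C}}\|p_i-c\|^2$. For each $i$ let $\tilde p_i$ be a point of $\mathcal{C}$ nearest to $p_i$, and let $\tilde P=(\tilde p_1,\dots,\tilde p_n)$. Let $\delta^2_{opt}$ and $\tilde\delta^2_{opt}$ be the optimal $k$-CMeans values of $P$ and $\tilde P$ (with the same $\mathcal{F}$), and let $\delta^2_{opt}([\mathcal{C}]^k)=\min_{(S_j)\in\mathcal{F}}\min_{(q_1,\dots,q_k)\in\mathcal{C}^k}\frac1n\sum_j\sum_{i\in S_j}\|p_i-q_j\|^2$. Then $\tilde\delta^2_{opt}\le 2\omega+2\delta^2_{opt}$ and $\delta^2_{opt}([\mathcal{C}]^k)\le 2\omega+8\tilde\delta^2_{opt}$.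
   Context: A constraint for $k$-CMeans is a nonempty family $\mathcal{F}$ of ordered partitions $(S_1,\dots,S_k)$ of $\{1,\dots,n\}$ into $k$ parts. For a sequence $X=(x_1,\dots,x_n)$ its optimal $k$-CMeans value is $\min_{(S_j)\in\mathcal{F}}\min_{c'_1,\dots,c'_k\in\mathbb{R}^d}\frac1n\sum_j\sum_{i\in S_j}\|x_i-c'_j\|^2$. *)

(* Defs.v *)
From HB Require Import structures.
From mathcomp Require Import all_boot all_order all_algebra.
From mathcomp Require Import classical_sets reals.
Set Implicit Arguments. Unset Strict Implicit. Unset Printing Implicit Defensive.
Import Order.TTheory GRing.Theory Num.Theory.
Local Open Scope ring_scope.
Local Open Scope classical_set_scope.

Definition sqnorm (R : realType) (d : nat) (v : 'rV[R]_d) : R :=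
  \sum_(l < d) (v ord0 l) ^+ 2.

(* An ordered partition (S_1,...,S_k) of {1..n} is encoded by the assignment
   s : 'I_n -> 'I_k, with S_j = { i | s i = j }.  A constraint is a nonempty
   set F of such assignments. *)
Definition partition_nk (n k : nat) := {ffun 'I_n -> 'I_k}.

Definition ccost (R : realType) (d n k : nat) (X : 'I_n -> 'rV[R]_d)
  (s : partition_nk n k) (cent : 'I_k -> 'rV[R]_d) : R :=
  n%:R^-1 * \sum_(j < k) \sum_(i < n | s i == j) sqnorm (X i - cent j).

Definition opt_cmeans (R : realType) (d n k : nat) (F : {set partition_nk n k})
  (X : 'I_n -> 'rV[R]_d) : R :=
  inf [set v | exists s cent, s \in F /\ v = ccost X s cent].

Definition opt_cmeans_in (R : realType) (d n k : nat) (F : {set partition_nk n k})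
  (X : 'I_n -> 'rV[R]_d) (c : 'I_k -> 'rV[R]_d) : R :=
  inf [set v | exists s (cent : 'I_k -> 'rV[R]_d),
        [/\ s \in F, (forall j, exists j', cent j = c j') & v = ccost X s cent]].

Definition sqdist_to (R : realType) (d k : nat) (c : 'I_k -> 'rV[R]_d)
  (x : 'rV[R]_d) : R :=
  inf [set v | exists j, v = sqnorm (x - c j)].

(* Main.v *)
Require Import Defs.
From HB Require Import structures.
From mathcomp Require Import all_boot all_order all_algebra.
From mathcomp Require Import reals.
From mathcomp Require Import classical_sets.
From mathcomp Require Import lra.
Import Order.TTheory GRing.Theory Num.Theory.
Local Open Scope ring_scope.
Local Open Scope classical_set_scope.

Section H.
Variable R : realType.

Lemma sqnorm_ge0 (d : nat) (v : 'rV[R]_d) : 0 <= sqnorm v.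
Proof. by apply: sumr_ge0 => l _; exact: sqr_ge0. Qed.

Lemma sqnormD2 (d : nat) (u v : 'rV[R]_d) :
  sqnorm (u + v) <= 2 * sqnorm u + 2 * sqnorm v.
Proof.
rewrite /sqnorm !mulr_sumr -big_split /=; apply: ler_sum => l _.
rewrite mxE; set x := u ord0 l; set y := v ord0 l.
have := sqr_ge0 (x - y); nra.
Qed.

Lemma ccost_ge0 (d n k : nat) (X : 'I_n -> 'rV[R]_d) (s : partition_nk n k) (cent : 'I_k -> 'rV[R]_d) :
  0 <= ccost X s cent.
Proof.
apply: mulr_ge0; first by rewrite invr_ge0 ler0n.
by apply: sumr_ge0 => j _; apply: sumr_ge0 => i _; exact: sqnorm_ge0.
Qed.

Lemma inf_le_elt (E : set R) x : (forall y, E y -> 0 <= y) -> E x -> inf E <= x.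
Proof.
move=> H Ex; apply: (ge_inf _ Ex); exists 0 => y /H //.
Qed.

End H.
Arguments sqnormD2 {R d}.

Theorem lemma8 (R : realType) (d n k : nat)
  (P : 'I_n -> 'rV[R]_d) (F : {set partition_nk n k}) (HF : F != finset.set0)
  (c : 'I_k -> 'rV[R]_d) (Ptil : 'I_n -> 'rV[R]_d)
  (HPtilC : forall i, exists j, Ptil i = c j)
  (HPtilmin : forall i j, sqnorm (P i - Ptil i) <= sqnorm (P i - c j)) :
  let omega := n%:R^-1 * \sum_(i < n) sqdist_to c (P i) in
  opt_cmeans F Ptil <= 2 * omega + 2 * opt_cmeans F P /\
  opt_cmeans_in F P c <= 2 * omega + 8 * opt_cmeans F Ptil.
Proof.
move=> omega.
have [s0 s0F] : exists s0, s0 \in F.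
  by case/set0Pn: HF => s0 Hs; exists s0.
set om := n%:R^-1 * \sum_(i < n) sqnorm (P i - Ptil i).
have omle : om <= omega.
  apply: ler_wpM2l; first by rewrite invr_ge0 ler0n.
  apply: ler_sum => i _; apply: lb_le_inf.
    by case: (HPtilC i) => j _; exists (sqnorm (P i - c j)), j.
  by move=> v [j ->]; exact: HPtilmin.
have ninv : 0 <= n%:R^-1 :> R by rewrite invr_ge0 ler0n.
have sumpart : forall s : partition_nk n k,
    \sum_(j < k) \sum_(i < n | s i == j) sqnorm (P i - Ptil i)
    = \sum_(i < n) sqnorm (P i - Ptil i).
  move=> s; rewrite [RHS](partition_big s xpredT) //=.
have ne : forall X : 'I_n -> 'rV[R]_d,
    [set v | exists s cent, s \in F /\ v = ccost X s cent] !=set0.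
  by move=> X; exists (ccost X s0 c), s0, c.
split.
- suff H : forall s cent, s \in F ->
      opt_cmeans F Ptil <= 2 * om + 2 * ccost P s cent.
    have : (opt_cmeans F Ptil - 2 * om) / 2 <= opt_cmeans F P.
      apply: lb_le_inf => // v [s [cent [sF ->]]].
      have := H s cent sF; lra.
    lra.
  move=> s cent sF.
  apply: (@le_trans _ _ (ccost Ptil s cent)).
    apply: inf_le_elt; last by exists s, cent.
    by move=> y [s' [c' [_ ->]]]; exact: ccost_ge0.
  rewrite /ccost /om -(sumpart s) !(mulrCA _ n%:R^-1) -mulrDr; apply: ler_wpM2l => //.
  rewrite !mulr_sumr -big_split; apply: ler_sum => j _.
  rewrite !mulr_sumr -big_split; apply: ler_sum => i _.
  have -> : Ptil i - cent j = (Ptil i - P i) + (P i - cent j) by rewrite addrA subrK.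
  have E : sqnorm (Ptil i - P i) = sqnorm (P i - Ptil i).
    by rewrite -opprB /sqnorm; apply: eq_bigr => l _; rewrite mxE sqrrN.
  by rewrite -E; exact: sqnormD2.
- suff H : forall s cent, s \in F ->
      opt_cmeans_in F P c <= 2 * om + 8 * ccost Ptil s cent.
    have : (opt_cmeans_in F P c - 2 * om) / 8 <= opt_cmeans F Ptil.
      apply: lb_le_inf => // v [s [cent [sF ->]]].
      have := H s cent sF; lra.
    lra.
  move=> s cent sF.
  pose a j := Order.arg_min j xpredT (fun j' => sqnorm (cent j - c j')).
  have amin : forall j j', sqnorm (cent j - c (a j)) <= sqnorm (cent j - c j').
    by move=> j j'; rewrite /a; case: arg_minP => // x _ Hx; exact: Hx.
  pose q j := c (a j).
  apply: (@le_trans _ _ (ccost P s q)).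
    apply: inf_le_elt; last by exists s, q; split => // j; exists (a j).
    by move=> y [s' [c' [_ _ ->]]]; exact: ccost_ge0.
  rewrite /ccost /om -(sumpart s) !(mulrCA _ n%:R^-1) -mulrDr; apply: ler_wpM2l => //.
  rewrite !mulr_sumr -big_split; apply: ler_sum => j _.
  rewrite !mulr_sumr -big_split; apply: ler_sum => i _.
  have -> : P i - q j = (P i - Ptil i) + (Ptil i - q j) by rewrite addrA subrK.
  change (sqnorm (P i - Ptil i + (Ptil i - q j)) <= 2 * sqnorm (P i - Ptil i) + 8 * sqnorm (Ptil i - cent j)).
  have H1 := sqnormD2 (P i - Ptil i) (Ptil i - q j).
  suff : sqnorm (Ptil i - q j) <= 4 * sqnorm (Ptil i - cent j) by lra.
  have -> : Ptil i - q j = (Ptil i - cent j) + (cent j - q j) by rewrite addrA subrK.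
  apply: (le_trans (sqnormD2 (Ptil i - cent j) (cent j - q j))).
  case: (HPtilC i) => j' ->.
  have := amin j j'.
  have -> : sqnorm (cent j - c j') = sqnorm (c j' - cent j).
    by rewrite -opprB /sqnorm; apply: eq_bigr => l _; rewrite mxE sqrrN.
  rewrite /q; lra.
Qed.
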